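(* Let $D$ be an Eulerian digraph (finite, without loops, parallel arcs or digons) which admits a simple dicycle intersection graph, i.e. $D$ has a cycle decomposition $\mathcal{F}(D)$ in which any two distinct dicycles share at most one vertex. Then every vertex of $D$ is a Seymour vertex: $|N^{+2}(v)|\geq |N^{+}(v)|$ for all $v\in V(D)$, i.e. $SV(D)=V(D)$.
   Context: All digraphs are finite, with no loops, no parallel arcs and no digons (a digon is a pair of arcs $u\to w$, $w\to u$); in particular every dicycle has length at least $3$. For a vertex $v$, $N^{+}(v)$ is the set of out-neighbours of $v$, and $N^{+2}(v)$ is the second out-neighbourhood: the set of vertices $w\notin N^{+}(v)\cup\{v\}$ such that $u\to w$ is an arc for some $u\in N^{+}(v)$ (vertices at directed distance exactly $2$ from $v$). A vertex $v$ with $|N^{+2}(v)|\ge |N^{+}(v)|$ is a Seymour vertex, and $SV(D)$ denotes the set of Seymour vertices of $D$. An Eulerian digraph is a (weakly) connected digraph having a closed directed trail using every arc exactly once; equivalently a connected digraph with $d^{+}(v)=d^{-}(v)$ for all $v$. A cycle decomposition $\mathcal{F}(D)$ is a set of dicycles of $D$ whose arc sets partition $A(D)$. The dicycle intersection graph $CI(D)$ associated with $\mathcal{F}(D)$ is the multigraph with vertex set $\mathcal{F}(D)$ having, for each pair of distinct dicycles $C,C'\in\mathcal{F}(D)$ and each vertex of $D$ lying on both $C$ and $C'$, one edge between $C$ and $C'$. $D$ admits a simple dicycle intersection graph if for some cycle decomposition this multigraph has no parallel edges. *)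

(* Defs.v *)
From mathcomp Require Import all_boot.
Set Implicit Arguments. Unset Strict Implicit. Unset Printing Implicit Defensive.

Section Digraph.
Variables (T : finType) (e : rel T).

(* A digraph on vertex set T with arc relation e: no loops, no digons
   (parallel arcs are excluded by representing arcs as a relation). *)
Definition simple_digraph : Prop :=
  (forall v, ~~ e v v) /\ (forall u w, e u w -> ~~ e w u).

Definition outdeg (v : T) : nat := #|[set w | e v w]|.
Definition indeg (v : T) : nat := #|[set u | e u v]|.

Definition weakly_connected : Prop :=
  forall x y, connect [rel a b | e a b || e b a] x y.

Definition eulerian : Prop :=
  weakly_connected /\ forall v, outdeg v = indeg v.

Definition dicycle (c : seq T) : bool := [&& c != [::], uniq c & cycle e c].

Definition arc_on (c : seq T) (x y : T) : bool := (x \in c) && (next c x == y).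

Definition cycle_decomposition (F : seq (seq T)) : Prop :=
  (forall c, c \in F -> dicycle c) /\
  (forall x y, e x y -> count (fun c => arc_on c x y) F = 1).

Definition simple_CI (F : seq (seq T)) : Prop :=
  forall i j, i < j < size F ->
    #|[pred v : T | (v \in nth [::] F i) && (v \in nth [::] F j)]| <= 1.

Definition admits_simple_CI : Prop :=
  exists F, cycle_decomposition F /\ simple_CI F.

Definition out_nbhd (v : T) : {set T} := [set w | e v w].

Definition out_nbhd2 (v : T) : {set T} :=
  [set w | [&& w \notin out_nbhd v, w != v & [exists u, e v u && e u w]]].

Definition seymour_vertex (v : T) : bool := #|out_nbhd v| <= #|out_nbhd2 v|.

End Digraph.

(* Main.v *)
Require Import Defs.
From mathcomp Require Import all_boot.

Section Proof.
Set Implicit Arguments.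
Variables (T : finType) (e : rel T).
Hypothesis Hloop : forall v, ~~ e v v.
Hypothesis Hdig : forall u w, e u w -> ~~ e w u.
Variable F : seq (seq T).
Hypothesis HF : cycle_decomposition e F.
Hypothesis HS : simple_CI F.

Lemma share_lt (i j : nat) (a b : T) : i < j -> j < size F ->
  a \in nth [::] F i -> a \in nth [::] F j ->
  b \in nth [::] F i -> b \in nth [::] F j -> a != b -> False.
Proof.
move=> ij jF ai aj bi bj ab.
have H := @HS i j; rewrite ij jF in H; have {}H := H isT.
have : #|[set a; b]| <= #|[pred v : T | (v \in nth [::] F i) && (v \in nth [::] F j)]|.
  apply: subset_leq_card; apply/subsetP => x; rewrite !inE => /orP[]/eqP->;
  by rewrite ?ai ?aj ?bi ?bj.
by rewrite cards2 ab => /leq_trans /(_ H).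
Qed.

Lemma share (i j : nat) (a b : T) : i < size F -> j < size F -> i != j ->
  a \in nth [::] F i -> a \in nth [::] F j ->
  b \in nth [::] F i -> b \in nth [::] F j -> a != b -> False.
Proof.
move=> iF jF; case: (ltngtP i j) => // [ij|ji] _.
- exact: share_lt.
- move=> ai aj bi bj; exact: share_lt ji iF aj ai bj bi.
Qed.

Definition idx v w := find (fun c => arc_on c v w) F.

Lemma idxP v w : e v w -> idx v w < size F /\ arc_on (nth [::] F (idx v w)) v w.
Proof.
move=> evw; have h : has (fun c => arc_on c v w) F.
  by rewrite has_count (proj2 HF _ _ evw).
by split; [rewrite -has_find | exact: (nth_find [::] h)].
Qed.

Lemma dic (i : nat) : i < size F -> dicycle e (nth [::] F i).
Proof. by move=> iF; apply: (proj1 HF); apply: mem_nth. Qed.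

Definition f v w := next (nth [::] F (idx v w)) w.

Lemma f_props v w : e v w ->
  [/\ e w (f v w), f v w != v, f v w != w,
      f v w \in nth [::] F (idx v w) & w \in nth [::] F (idx v w)].
Proof.
move=> evw; have [iF /andP[vc /eqP nv]] := idxP evw.
have /and3P[_ _ cyc] := @dic _ iF.
have wc : w \in nth [::] F (idx v w) by rewrite -{1}nv mem_next.
have ewf : e w (f v w) by apply: next_cycle.
split => //.
- apply/eqP => fv; move: (Hdig evw); by rewrite -fv ewf.
- apply/eqP => fw; move: (Hloop w); by rewrite -{2}fw ewf.
- by rewrite /f mem_next.
Qed.

Lemma idx_eq v w1 w2 : e v w1 -> e v w2 -> idx v w1 = idx v w2 -> w1 = w2.
Proof.
move=> e1 e2 h; have [_ /andP[_ /eqP n1]] := idxP e1.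
have [_ /andP[_ /eqP n2]] := idxP e2.
by rewrite -n1 -n2 h.
Qed.

Lemma f_inj v : {in out_nbhd e v &, injective (f v)}.
Proof.
move=> w1 w2; rewrite !inE => e1 e2 fe.
case: (eqVneq (idx v w1) (idx v w2)) => [|ne]; first exact: idx_eq.
have [i1F /andP[v1 _]] := idxP e1.
have [i2F /andP[v2 _]] := idxP e2.
have [_ fv _ f1 _] := f_props e1.
have [_ _ _ f2 _] := f_props e2.
exfalso; apply: (@share _ _ _ _ i1F i2F ne v1 v2 f1); first by rewrite fe.
by rewrite eq_sym.
Qed.

Lemma f_out2 v w : w \in out_nbhd e v -> f v w \in out_nbhd2 e v.
Proof.
rewrite inE => evw; have [ewf fv fw fc wc] := f_props evw.
rewrite inE fv /=; apply/andP; split; last by apply/existsP; exists w; rewrite evw.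
rewrite inE; apply/negP => evf.
case: (eqVneq (idx v w) (idx v (f v w))) => [h|ne].
  by move: fw; rewrite -(idx_eq evw evf h) eqxx.
have [iF /andP[vc _]] := idxP evw.
have [jF /andP[vc' _]] := idxP evf.
apply: (@share _ _ _ _ iF jF ne vc vc' fc); last by rewrite eq_sym.
have [_ /andP[_ /eqP nf]] := idxP evf.
by rewrite -{1}nf mem_next.
Qed.

End Proof.

Theorem theorem2p1 (T : finType) (e : rel T) :
  simple_digraph e -> eulerian e -> admits_simple_CI e ->
  forall v : T, seymour_vertex e v.
Proof.
move=> [Hl Hd] _ [F [HF HS]] v; rewrite /seymour_vertex.
rewrite -(card_in_imset (f_inj Hl Hd HF HS (v:=v))).
apply: subset_leq_card; apply/subsetP => x /imsetP[w wN ->].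
exact: f_out2.
Qed.
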